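(* Let $E$ be a $KB$-space, let $\mathfrak{B}$ be a Boolean subalgebra of $\mathfrak{B}(E)$, let $\xi$ be a forward filtration in $\mathfrak{B}$ and let $T$ be a $\mathfrak{B}$-Volterra operator on $E$. Then for every $k\ge0$: $\iota_{L^k(\xi)}\circ T=\hat{T}_{L^k(\xi)}\circ\iota_{L^k(\xi)}$, $\mathbf{s}\circ\hat{T}_{L^k(\xi)}=\hat{T}_{L^{k+1}(\xi)}\circ\mathbf{s}$ on $\mathcal{M}_b(L^k(\xi))$, and $\mathbf{s}\circ\iota_{L^k(\xi)}=\iota_{L^{k+1}(\xi)}$; all maps are norm continuous operators between Banach lattices. Moreover, if $\hat{T}_\xi\colon\mathcal{M}_b(\xi)\to\mathcal{M}_b(\xi)$ is surjective then $\hat{T}_{L^k(\xi)}$ is open for every $k\ge1$.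
   Context: A $KB$-space is a Banach lattice in which every increasing norm bounded sequence is norm convergent. $\mathfrak{B}(E)$ is the Boolean algebra of all order projections on $E$ ($\pi\le\rho$ iff $\pi\rho=\pi$, zero $\mathbf 0$, unit $\mathbf 1=I_E$). A positive operator $T$ is $\mathfrak{B}$-Volterra if for all $\pi\in\mathfrak{B}$, $x,y\in E$, $\pi x=\pi y$ implies $\pi Tx=\pi Ty$. A forward filtration in $\mathfrak{B}$ is a map $\xi\colon\{0,1,\dots,\infty\}\to\mathfrak{B}$ with $\xi_n\le\xi_{n+1}$, $\xi_0=\mathbf 0$, $\xi_\infty=\mathbf 1$; $L(\xi)_0=\xi_0$, $L(\xi)_n=\xi_{n+1}$ ($n\ge1$), $L^k$ is the $k$-th iterate, $L^0(\xi)=\xi$. $\mathcal{M}_b(\xi)$ is the Banach lattice of sequences $(x_n)_{n\ge1}$ in $E$ with $\xi_nx_m=x_n$ for $m\ge n\ge1$ and $\sup_n\|x_n\|<\infty$ (coordinatewise order, sup norm). $\iota_\xi(x)=(\xi_nx)_{n\ge1}$, $\hat{T}_\xi((x_n))=(\xi_nTx_n)$, $\mathbf{s}((x_n)_{n\ge1})=(x_{n+1})_{n\ge1}$ (mapping $\mathcal{M}_b(\xi)$ to $\mathcal{M}_b(L(\xi))$). *)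

(* Defs.v *)
From HB Require Import structures.
From mathcomp Require Import all_boot all_order all_algebra.
From mathcomp Require Import all_classical all_reals all_analysis.
Set Implicit Arguments. Unset Strict Implicit. Unset Printing Implicit Defensive.
Import Order.TTheory GRing.Theory Num.Theory.
Import numFieldNormedType.Exports.
Local Open Scope classical_set_scope.
Local Open Scope ring_scope.

Section Defs.
Variables (R : realType) (E : completeNormedModType R).

Record BanachLattice := {
  le : E -> E -> Prop;
  jn : E -> E -> E;
  le_refl : forall x, le x x;
  le_trans : forall x y z, le x y -> le y z -> le x z;
  le_anti : forall x y, le x y -> le y x -> x = y;
  le_add : forall x y z, le x y -> le (x + z) (y + z);
  le_scale : forall (a : R) x y, 0 <= a -> le x y -> le (a *: x) (a *: y);
  jn_ub1 : forall x y, le x (jn x y);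
  jn_ub2 : forall x y, le y (jn x y);
  jn_least : forall x y z, le x z -> le y z -> le (jn x y) z;
  norm_lattice : forall x y, le (jn x (- x)) (jn y (- y)) -> `|x| <= `|y|
}.

Variable BL : BanachLattice.

Definition KB_space : Prop :=
  forall u : nat -> E, (forall n, le BL (u n) (u n.+1)) ->
    (exists M : R, forall n, `|u n| <= M) -> cvg (u @ \oo).

Definition linop (T : E -> E) : Prop :=
  forall (a : R) x y, T (a *: x + y) = a *: T x + T y.

Definition positive_op (T : E -> E) : Prop :=
  linop T /\ forall x, le BL 0 x -> le BL 0 (T x).

Definition order_projection (P : E -> E) : Prop :=
  linop P /\ (forall x, P (P x) = P x) /\
  (forall x, le BL 0 x -> le BL 0 (P x) /\ le BL (P x) x).

Definition proj_le (pi rho : E -> E) : Prop := forall x, pi (rho x) = pi x.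

(** Boolean subalgebra of B(E): contains 0 and 1 = I, closed under
    meet (composition) and complement (I - pi) (hence under joins). *)
Definition boolean_subalgebra (B : (E -> E) -> Prop) : Prop :=
  (forall pi, B pi -> order_projection pi) /\
  B (fun _ => 0) /\ B id /\
  (forall pi rho, B pi -> B rho -> B (fun x => pi (rho x))) /\
  (forall pi, B pi -> B (fun x => x - pi x)).

Definition volterra (B : (E -> E) -> Prop) (T : E -> E) : Prop :=
  positive_op T /\
  forall pi, B pi -> forall x y, pi x = pi y -> pi (T x) = pi (T y).

(** forward filtration: xi n for n in {0,1,2,...}; xi_oo = 1 is implicit *)
Definition forward_filtration (B : (E -> E) -> Prop) (xi : nat -> E -> E) : Prop :=
  (forall n, B (xi n)) /\ (forall n, proj_le (xi n) (xi n.+1)) /\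
  (forall x, xi 0%N x = 0).

Definition Lshift (xi : nat -> E -> E) : nat -> E -> E :=
  fun n => if n == 0%N then xi 0%N else xi n.+1.

Definition Lk (k : nat) (xi : nat -> E -> E) : nat -> E -> E := iter k Lshift xi.

(** Sequences (x_n)_{n>=1} are encoded as x : nat -> E with x i = x_{i+1}. *)
Definition Mb (xi : nat -> E -> E) (x : nat -> E) : Prop :=
  (forall n m, (n <= m)%N -> xi n.+1 (x m) = x n) /\
  (exists M : R, forall n, `|x n| <= M).

Definition mnorm (x : nat -> E) : R := sup (range (fun n => `|x n|)).

Definition iota_xi (xi : nat -> E -> E) (x : E) : nat -> E := fun n => xi n.+1 x.
Definition That (xi : nat -> E -> E) (T : E -> E) (x : nat -> E) : nat -> E :=
  fun n => xi n.+1 (T (x n)).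
Definition sh (x : nat -> E) : nat -> E := fun n => x n.+1.

Definition seq_linear (P : (nat -> E) -> Prop) (F : (nat -> E) -> (nat -> E)) :=
  forall (a : R) x y, P x -> P y -> F (fun n => a *: x n + y n) = (fun n => a *: F x n + F y n).

Definition cont_EE (T : E -> E) : Prop :=
  forall x (e : R), 0 < e -> exists2 d : R, 0 < d &
    forall y, `|y - x| < d -> `|T y - T x| < e.

Definition cont_EM (F : E -> nat -> E) : Prop :=
  forall x (e : R), 0 < e -> exists2 d : R, 0 < d &
    forall y, `|y - x| < d -> mnorm (fun n => F y n - F x n) < e.

Definition cont_MM (P : (nat -> E) -> Prop) (F : (nat -> E) -> (nat -> E)) : Prop :=
  forall x, P x -> forall (e : R), 0 < e -> exists2 d : R, 0 < d &
    forall y, P y -> mnorm (fun n => y n - x n) < d ->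
      mnorm (fun n => F y n - F x n) < e.

Definition open_MM (P : (nat -> E) -> Prop) (F : (nat -> E) -> (nat -> E)) : Prop :=
  forall x, P x -> forall (e : R), 0 < e -> exists2 d : R, 0 < d &
    forall y, P y -> mnorm (fun n => y n - F x n) < d ->
      exists2 z, P z /\ mnorm (fun n => z n - x n) < e & F z = y.

End Defs.
Arguments sh {R E} x _.

(* Main.v *)
Require Import Defs.
From mathcomp Require Import all_boot all_order all_algebra.
From mathcomp Require Import all_classical all_reals all_analysis.
From mathcomp Require Import ring lra zify.
Set Implicit Arguments. Unset Strict Implicit.
Import Order.TTheory GRing.Theory Num.Theory.
Import numFieldNormedType.Exports.
Local Open Scope ring_scope.
Local Open Scope classical_set_scope.
Section RealAux.
Variable R : realType.

Lemma le_eps (a b : R) : (forall e, 0 < e -> a <= b + e) -> a <= b.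
Proof. by move=> H; apply/ler_addgt0Pr. Qed.

Lemma inv_small (c e : R) : 0 <= c -> 0 < e ->
  exists J : nat, forall j, (J <= j)%N -> c / (j.+1%:R) <= e.
Proof.
move=> c0 e0; exists (Num.Def.trunc (c / e)) => j Jj.
have h1 := truncnS_gt (c / e).
rewrite ler_pdivrMr //.
have : c / e < j.+1%:R by apply: lt_le_trans h1 _; rewrite ler_nat.
by rewrite ltr_pdivrMr // => /ltW; rewrite mulrC.
Qed.

Definition bb (j : nat) : R := (j.+1%:R)^-1.

Lemma bb_gt0 j : 0 < bb j.
Proof. by rewrite /bb invr_gt0. Qed.

Lemma bb_decr j : bb j.+1 < bb j.
Proof. by rewrite /bb ltf_pV2 ?posrE // ltr_nat. Qed.

Definition cc (j : nat) : R := bb j - bb j.+1.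

Lemma cc_gt0 j : 0 < cc j.
Proof. by rewrite /cc subr_gt0 bb_decr. Qed.

Lemma cc_le j : cc j <= bb j.
Proof. by rewrite /cc lerBlDr lerDl ltW // bb_gt0. Qed.

Lemma bb_small (c e : R) : 0 <= c -> 0 < e -> exists J : nat, forall j, (J <= j)%N -> c * bb j <= e.
Proof. by move=> c0 e0; have [J HJ] := (inv_small c0 e0); exists J. Qed.

End RealAux.
Section OMT.
Variables (R : realType) (V : lmodType R) (P : V -> Prop) (N : V -> R) (F : V -> V).
Variable hP : forall (a : R) x y, P x -> P y -> P (a *: x + y).
Variable hP0 : P 0.
Variable hNtri : forall x y, P x -> P y -> N (x + y) <= N x + N y.
Variable hNZ : forall (a : R) x, P x -> N (a *: x) = `|a| * N x.
Variable hNdef : forall x, P x -> N x = 0 -> x = 0.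
Variable hcomplete : forall u : nat -> V, (forall j, P (u j)) ->
  (forall e, 0 < e -> exists J, forall j m, (J <= j)%N -> (j <= m)%N -> N (u m - u j) <= e) ->
  exists2 v, P v & forall e, 0 < e -> exists J, forall j, (J <= j)%N -> N (v - u j) <= e.
Variable hFP : forall x, P x -> P (F x).
Variable hFlin : forall (a : R) x y, P x -> P y -> F (a *: x + y) = a *: F x + F y.
Variable C : R.
Variable hC : forall x, P x -> N (F x) <= C * N x.
Variable hsurj : forall y, P y -> exists2 x, P x & F x = y.

Lemma PD x y : P x -> P y -> P (x + y).
Proof. by move=> Px Py; rewrite -[x]scale1r; apply: hP. Qed.
Lemma PZ (a : R) x : P x -> P (a *: x).
Proof. by move=> Px; rewrite -[_ *: _]addr0; apply: hP. Qed.
Lemma PN x : P x -> P (- x).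
Proof. by move=> Px; rewrite -scaleN1r; apply: PZ. Qed.
Lemma PB x y : P x -> P y -> P (x - y).
Proof. by move=> Px Py; apply: PD => //; apply: PN. Qed.

Lemma N0 : N 0 = 0.
Proof. by rewrite -(scale0r 0) hNZ // normr0 mul0r. Qed.
Lemma NN x : P x -> N (- x) = N x.
Proof. by move=> Px; rewrite -scaleN1r hNZ // normrN normr1 mul1r. Qed.
Lemma NC x y : P x -> P y -> N (x - y) = N (y - x).
Proof. by move=> Px Py; rewrite -(NN (PB Px Py)) opprB. Qed.
Lemma Nge0 x : P x -> 0 <= N x.
Proof.
move=> Px; have H := hNtri Px (PN Px); rewrite subrr N0 NN // in H; lra.
Qed.
Lemma F0 : F 0 = 0.
Proof.
have h := hFlin 1 hP0 hP0; rewrite !scale1r addr0 -{1}(addr0 (F 0)) in h.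
by apply/esym/(addrI (F 0)).
Qed.
Lemma FD x y : P x -> P y -> F (x + y) = F x + F y.
Proof. by move=> Px Py; have := hFlin 1 Px Py; rewrite !scale1r. Qed.
Lemma FZ (a : R) x : P x -> F (a *: x) = a *: F x.
Proof. by move=> Px; have := hFlin a Px hP0; rewrite !addr0 F0 addr0. Qed.
Lemma FB x y : P x -> P y -> F (x - y) = F x - F y.
Proof. by move=> Px Py; rewrite (FD Px (PN Py)); have := FZ (-1) Py; rewrite !scaleN1r => ->. Qed.

Lemma telescope (u : nat -> V) (b : nat -> R) :
  (forall j, P (u j)) -> (forall j, N (u j.+1 - u j) <= b j - b j.+1) ->
  forall j m, (j <= m)%N -> N (u m - u j) <= b j - b m.
Proof.
move=> Pu Hb j m /subnK <-; elim: (m - j)%N => [|k IH].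
  by rewrite add0n subrr N0 subrr.
rewrite addSn.
have -> : u (k + j).+1 - u j = (u (k + j).+1 - u (k + j)) + (u (k + j) - u j).
  by rewrite addrA subrK.
apply: le_trans (hNtri (PB (Pu _) (Pu _)) (PB (Pu _) (Pu _))) _.
have := Hb (k + j)%N; lra.
Qed.

(* Step 1: Baire category argument *)
Lemma step1 : exists n : nat, exists2 y0, P y0 & exists2 r, 0 < r &
  forall y, P y -> N (y - y0) < r -> forall eps, 0 < eps ->
    exists x, [/\ P x, N x <= n%:R & N (F x - y) < eps].
Proof.
apply: contrapT => Hneg.
have H : forall (n : nat) y0, P y0 -> forall r, 0 < r -> exists y, [/\ P y, N (y - y0) < r &
    exists2 eps, 0 < eps & forall x, P x -> N x <= n%:R -> eps <= N (F x - y)].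
  move=> n y0 Py0 r r0; apply: contrapT => Hn; apply: Hneg; exists n, y0 => //; exists r => //.
  move=> y Py Hy eps eps0; apply: contrapT => He; apply: Hn; exists y; split => //.
  exists eps => // x Px Nx; rewrite leNgt; apply/negP => Hlt; apply: He; exists x; split => //.
pose Good (p : nat * (V * R)) (q : V * R) :=
  (P p.2.1 /\ 0 < p.2.2) ->
  [/\ P q.1, N (q.1 - p.2.1) < p.2.2 / 2, 0 < q.2, q.2 <= p.2.2 / 2 &
      q.2 <= bb R p.1 /\ exists2 eps, q.2 <= eps / 2 &
        forall x, P x -> N x <= p.1%:R -> eps <= N (F x - q.1)].
have Hex : forall p, exists q, Good p q.
  move=> [j [a r]]; have [Pa|nPa] := pselect (P a /\ 0 < r); last first.
    by exists (0, 0) => /= //.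
  case: Pa => Pa r0.
  have [y [Py Hy [eps eps0 Heps]]] := H j a Pa (r / 2) (divr_gt0 r0 (ltr0Sn _ 1)).
  pose r' := Num.min (Num.min (r / 2) (eps / 2)) (bb R j).
  have r'0 : 0 < r' by rewrite !lt_min !divr_gt0 // ?bb_gt0.
  exists (y, r') => _ /=; split => //.
  - by rewrite /r' !ge_min lexx.
  - split; first by rewrite /r' !ge_min lexx orbT.
    by exists eps => //; rewrite /r' !ge_min lexx !orbT.
have [f Hf] := choice Hex.
pose fix ar (j : nat) : V * R := if j is i.+1 then f (i, ar i) else (0, 1).
have Har : forall j, P (ar j).1 /\ 0 < (ar j).2.
  elim => [|j [IH1 IH2]] /=; first by split.
  by have [] := Hf (j, ar j) (conj IH1 IH2).
pose a j := (ar j).1; pose r j := (ar j).2.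
have Pa : forall j, P (a j) by move=> j; case: (Har j).
have r0 : forall j, 0 < r j by move=> j; case: (Har j).
have Hstep : forall j, N (a j.+1 - a j) <= r j - r j.+1.
  move=> j; have [_ h1 _ h2 _] := Hf (j, ar j) (Har j).
  rewrite /a /r /=; move: h1 h2 => /=; lra.
have Hrb : forall j, r j.+1 <= bb R j.
  by move=> j; have [_ _ _ _ [h _]] := Hf (j, ar j) (Har j).
have Hdist := telescope Pa Hstep.
have Hcau : forall e, 0 < e -> exists J, forall j m, (J <= j)%N -> (j <= m)%N -> N (a m - a j) <= e.
  move=> e e0; have [J HJ] := bb_small (@ler01 R) e0.
  exists J.+1 => j m Jj jm; case: j Jj jm => // j Jj jm.
  apply: le_trans (Hdist _ _ jm) _.
  have := HJ j Jj; have := Hrb j; have := r0 m; rewrite mul1r; lra.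
have [z Pz Hz] := hcomplete Pa Hcau.
have Hzr : forall j, N (z - a j) <= r j.
  move=> j; apply: le_eps => e e0; have [J HJ] := Hz e e0.
  have h1 := HJ (maxn J j) (leq_maxl _ _).
  have h2 := Hdist j (maxn J j) (leq_maxr _ _).
  have -> : z - a j = (z - a (maxn J j)) + (a (maxn J j) - a j) by rewrite addrA subrK.
  apply: le_trans (hNtri (PB Pz (Pa _)) (PB (Pa _) (Pa _))) _.
  have := r0 (maxn J j); lra.
have [x Px Fx] := hsurj Pz.
pose j := (Num.Def.trunc (N x)).+1.
have Nxj : N x <= j%:R by apply: ltW; exact: truncnS_gt.
have [_ _ _ _ [_ [eps Hre Heps]]] := Hf (j, ar j) (Har j).
have := Heps x Px Nxj; rewrite Fx /= -/(a j.+1) -/(r j.+1) => h.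
have := Hzr j.+1; have := r0 j.+1; move: Hre; rewrite -/(r j.+1); lra.
Qed.
Lemma step2 : exists2 K, 0 <= K & forall y, P y -> forall eps, 0 < eps ->
  exists x, [/\ P x, N x <= K * N y & N (F x - y) < eps].
Proof.
have [n [y0 Py0 [r r0 H]]] := step1.
have H2 : forall y, P y -> N y < r -> forall eps, 0 < eps ->
    exists x, [/\ P x, N x <= (n + n)%:R & N (F x - y) < eps].
  move=> y Py Ny eps eps0.
  have Pyy : P (y0 + y) by apply: PD.
  have e2 : 0 < eps / 2 by rewrite divr_gt0.
  have h1 : N (y0 + y - y0) < r by rewrite addrAC subrr add0r.
  have h2 : N (y0 - y0) < r by rewrite subrr N0.
  have [x1 [Px1 Nx1 Fx1]] := H (y0 + y) Pyy h1 (eps / 2) e2.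
  have [x2 [Px2 Nx2 Fx2]] := H y0 Py0 h2 (eps / 2) e2.
  exists (x1 - x2); split; first exact: PB.
    apply: le_trans (hNtri Px1 (PN Px2)) _.
    by rewrite NN // natrD lerD.
  have -> : F (x1 - x2) - y = (F x1 - (y0 + y)) - (F x2 - y0).
    rewrite FB //; set a := F x1; set b := F x2.
    by rewrite opprB opprD !addrA [_ - y + y0]addrAC subrK addrAC.
  apply: le_lt_trans (hNtri (PB (hFP Px1) Pyy) (PN (PB (hFP Px2) Py0))) _.
  rewrite NN; last by apply: PB => //; apply: hFP.
  move: Fx1 Fx2; lra.
pose K := (n + n)%:R * 2 / r.
exists K; first by rewrite /K divr_ge0 // ltW.
move=> y Py eps eps0.
have [Ny0|Nyp] := eqVneq (N y) 0.
  exists 0; split => //; first by rewrite N0 Ny0 mulr0.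
  by rewrite F0 sub0r NN // Ny0.
have Nyg : 0 < N y by rewrite lt_neqAle eq_sym Nyp Nge0.
have Ny0' : N y != 0 by [].
pose t := r / (2 * N y).
have t0 : 0 < t by rewrite /t divr_gt0 // mulr_gt0.
have Pty : P (t *: y) by apply: PZ.
have Nty : N (t *: y) < r.
  idtac.
  rewrite hNZ //; have -> : `|t| * N y = r / 2 by rewrite gtr0_norm // /t; field.
  by rewrite ltr_pdivrMr // ltr_pMr // ltr1n.
have [x' [Px' Nx' Fx']] := H2 _ Pty Nty (t * eps) (mulr_gt0 t0 eps0).
exists (t^-1 *: x'); split; first exact: PZ.
  rewrite hNZ // gtr0_norm ?invr_gt0 //.
  have tv0 : 0 <= t^-1 by rewrite invr_ge0 ltW.
  apply: le_trans (ler_wpM2l tv0 Nx') _.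
  have rn0 : r != 0 by rewrite gt_eqF.
  rewrite le_eqVlt; apply/orP; left; apply/eqP; rewrite /K /t; field; by rewrite rn0 Ny0'.
rewrite FZ //.
have -> : t^-1 *: F x' - y = t^-1 *: (F x' - t *: y).
  by rewrite scalerBr scalerA mulVf ?gt_eqF // scale1r.
rewrite hNZ; last by apply: PB => //; apply: hFP.
rewrite gtr0_norm ?invr_gt0 // -ltr_pdivlMl ?invr_gt0 // invrK.
by [].
Qed.
Lemma Cpos : exists2 C1, 0 < C1 & forall x, P x -> N (F x) <= C1 * N x.
Proof.
exists (`|C| + 1); first by rewrite ltr_wpDl.
move=> x Px; apply: le_trans (hC Px) _; apply: ler_wpM2r; first exact: Nge0.
by apply: le_trans (ler_norm C) _; rewrite lerDl.
Qed.

Lemma step3 : exists2 K, 0 <= K & forall w, P w -> forall delta, 0 < delta ->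
  exists x, [/\ P x, F x = w & N x <= K * N w + K * delta].
Proof.
have [K K0 H] := step2.
have [C1 C10 HC1] := Cpos.
exists K => // w Pw d d0.
have [x0 [Px0 Nx0 Fx0]] := H w Pw (d * cc R 0) (mulr_gt0 d0 (cc_gt0 _ _)).
pose Good (p : nat * V) (s' : V) := (P p.2 /\ N (w - F p.2) < d * cc R p.1) ->
  [/\ P s', N (s' - p.2) <= K * d * cc R p.1 & N (w - F s') < d * cc R p.1.+1].
have Hex : forall p, exists s', Good p s'.
  move=> [j s]; have [[Ps Hs]|nv] := pselect (P s /\ N (w - F s) < d * cc R j); last first.
    by exists 0 => /=.
  have Py : P (w - F s) by apply: PB => //; apply: hFP.
  have [x' [Px' Nx' Fx']] := H _ Py (d * cc R j.+1) (mulr_gt0 d0 (cc_gt0 _ _)).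
  exists (s + x') => _ /=; split; first exact: PD.
  - rewrite addrAC subrr add0r; apply: le_trans Nx' _.
    rewrite -mulrA; apply: ler_wpM2l => //; exact: ltW.
  - by rewrite FD // opprD addrA (NC Py (hFP Px')).
have [g Hg] := choice Hex.
pose fix sq (j : nat) : V := if j is i.+1 then g (i, sq i) else x0.
have Hsq : forall j, P (sq j) /\ N (w - F (sq j)) < d * cc R j.
  elim => [|j [IH1 IH2]] /=; first by split => //; rewrite NC //; apply: hFP.
  by have [] := Hg (j, sq j) (conj IH1 IH2).
have Psq : forall j, P (sq j) by move=> j; case: (Hsq j).
have Hstep : forall j, N (sq j.+1 - sq j) <= K * d * bb R j - K * d * bb R j.+1.
  move=> j; have [_ h _] := Hg (j, sq j) (Hsq j).
  by move: h; rewrite /cc mulrBr.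
have Hdist := telescope Psq Hstep.
have Kd0 : 0 <= K * d by rewrite mulr_ge0 // ltW.
have Hcau : forall e, 0 < e -> exists J, forall j m, (J <= j)%N -> (j <= m)%N -> N (sq m - sq j) <= e.
  move=> e e0; have [J HJ] := bb_small Kd0 e0.
  exists J => j m Jj jm; apply: le_trans (Hdist _ _ jm) _.
  have := HJ j Jj; have := bb_gt0 R m; have := mulr_ge0 Kd0 (ltW (bb_gt0 R m)).
  lra.
have [s Ps Hs] := hcomplete Psq Hcau.
exists s; split => //.
  apply/eqP; rewrite -subr_eq0; apply/eqP; apply: hNdef; first by apply: PB => //; apply: hFP.
  apply/eqP; rewrite eq_le Nge0 ?andbT; last by apply: PB => //; apply: hFP.
  apply: le_eps => e e0; rewrite add0r.
  have e2 : 0 < e / 2 / C1 by rewrite !divr_gt0.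
  have [J1 HJ1] := Hs _ e2.
  have [J2 HJ2] := bb_small (ltW d0) (divr_gt0 e0 (ltr0Sn _ 1)).
  pose j := maxn J1 J2.
  have h1 := HJ1 j (leq_maxl _ _); have h2 := HJ2 j (leq_maxr _ _).
  have -> : F s - w = F (s - sq j) + (F (sq j) - w) by rewrite FB // addrA subrK.
  apply: le_trans (hNtri (hFP (PB Ps (Psq _))) (PB (hFP (Psq _)) Pw)) _.
  have h3 := HC1 _ (PB Ps (Psq j)).
  have h4 : C1 * N (s - sq j) <= e / 2.
    by move: h1; rewrite ler_pdivlMr // mulrC.
  have [_ h5] := Hsq j.
  rewrite NC in h5; [|exact: Pw|exact: hFP].
  have h6 := cc_le R j; have h7 : d * cc R j <= d * bb R j by rewrite ler_wpM2l // ltW.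
  lra.
apply: le_eps => e e0.
have [J HJ] := Hs _ e0.
have h1 := HJ J (leqnn _).
have h2 := Hdist 0 J (leq0n _).
have -> : s = (s - sq J) + (sq J - sq 0) + x0 by rewrite /= addrA subrK subrK.
apply: le_trans (hNtri (PD (PB Ps (Psq _)) (PB (Psq _) (Psq _))) Px0) _.
apply: le_trans (lerD (hNtri (PB Ps (Psq _)) (PB (Psq _) (Psq _))) (lexx _)) _.
have hb0 : bb R 0 = 1 by rewrite /bb invr1.
have := bb_gt0 R J; have := mulr_ge0 Kd0 (ltW (bb_gt0 R J)).
move: h2; rewrite hb0 mulr1 /=; lra.
Qed.

Lemma open_main : forall x, P x -> forall e, 0 < e -> exists2 d, 0 < d &
  forall y, P y -> N (y - F x) < d -> exists2 z, P z /\ N (z - x) < e & F z = y.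
Proof.
have [K K0 H] := step3.
move=> x Px e e0.
pose d := e / (2 * K + 1).
have d0 : 0 < d by rewrite divr_gt0 // ltr_wpDl // mulr_ge0.
exists d => // y Py Hy.
have Pw : P (y - F x) by apply: PB => //; apply: hFP.
have [u [Pu Fu Nu]] := H _ Pw d d0.
exists (x + u); last by rewrite FD // Fu addrC subrK.
split; first exact: PD.
rewrite addrAC subrr add0r; apply: le_lt_trans Nu _.
have : K * N (y - F x) <= K * d by rewrite ler_wpM2l // ltW.
have : (2 * K + 1) * d = e by rewrite /d; field; rewrite gt_eqF // ltr_wpDl // mulr_ge0.
nra.
Qed.

End OMT.
Section BLat.
Variables (R : realType) (E : completeNormedModType R) (BL : BanachLattice E).
Local Notation le := (le BL).
Local Notation jn := (jn BL).
Definition ab (x : E) := jn x (- x).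

Lemma linop_add (f : E -> E) : linop f -> forall x y, f (x + y) = f x + f y.
Proof. by move=> lf x y; have := lf 1 x y; rewrite !scale1r. Qed.
Lemma linop0 (f : E -> E) : linop f -> f 0 = 0.
Proof.
move=> lf; have h := linop_add lf 0 0; rewrite addr0 -{1}(addr0 (f 0)) in h.
by apply/esym/(addrI (f 0)).
Qed.
Lemma linop_scale (f : E -> E) : linop f -> forall (a : R) x, f (a *: x) = a *: f x.
Proof. by move=> lf a x; have := lf a x 0; rewrite !addr0 linop0 // addr0. Qed.
Lemma linop_opp (f : E -> E) : linop f -> forall x, f (- x) = - f x.
Proof. by move=> lf x; have := linop_scale lf (-1) x; rewrite !scaleN1r. Qed.
Lemma linop_sub (f : E -> E) : linop f -> forall x y, f (x - y) = f x - f y.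
Proof. by move=> lf x y; rewrite linop_add // linop_opp. Qed.

Lemma le_sub0 x y : le x y -> le 0 (y - x).
Proof. by move=> h; have := le_add (- x) h; rewrite subrr. Qed.
Lemma le_sub0' x y : le 0 (y - x) -> le x y.
Proof. by move=> h; have := le_add x h; rewrite add0r subrK. Qed.
Lemma le_opp x y : le x y -> le (- y) (- x).
Proof. by move=> h; apply: le_sub0'; rewrite opprK addrC; apply: le_sub0. Qed.
Lemma le_addD x y a b : le x a -> le y b -> le (x + y) (a + b).
Proof.
move=> h1 h2; apply: Defs.le_trans (le_add y h1) _.
by rewrite addrC [a + b]addrC; apply: le_add.
Qed.
Lemma ab_ge0 x : le 0 (ab x).
Proof.
have h := le_addD (jn_ub1 BL x (- x)) (jn_ub2 BL x (- x)).
rewrite subrr in h.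
have h2 : (0 : R) <= 2^-1 by rewrite invr_ge0.
have := le_scale h2 h; rewrite scaler0 -mulr2n -scalerMnr scalerMnl -mulr_natr mulVf ?scale1r //.
Qed.
Lemma ab_pos x : le 0 x -> ab x = x.
Proof.
move=> h; apply: Defs.le_anti; last exact: jn_ub1.
apply: jn_least; first exact: Defs.le_refl.
have h' := le_opp h; rewrite oppr0 in h'; exact: Defs.le_trans h' h.
Qed.
Lemma ab_ab x : ab (ab x) = ab x.
Proof. exact/ab_pos/ab_ge0. Qed.
Lemma norm_ab x : `|ab x| = `|x|.
Proof.
apply/eqP; rewrite eq_le; apply/andP; split; apply: (@norm_lattice _ _ BL).
  by change (le (ab (ab x)) (ab x)); rewrite ab_ab; exact: Defs.le_refl.
by change (le (ab x) (ab (ab x))); rewrite ab_ab; exact: Defs.le_refl.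
Qed.
Lemma norm_mono x y : le 0 x -> le x y -> `|x| <= `|y|.
Proof.
move=> h0 h; apply: (@norm_lattice _ _ BL); change (le (ab x) (ab y)); rewrite ab_pos // ab_pos //.
exact: Defs.le_trans h.
Qed.
Lemma cone_closed x : (forall e : R, 0 < e -> exists p, le 0 p /\ `|p - x| < e) -> le 0 x.
Proof.
move=> H; pose m := jn (- x) 0.
have m0 : le 0 m by exact: jn_ub2.
have Hm : forall e : R, 0 < e -> `|m| < e.
  move=> e e0; have [p [p0 hp]] := H e e0.
  rewrite -norm_ab in hp; apply: le_lt_trans hp.
  apply: norm_mono => //; apply: jn_least; last exact: ab_ge0.
  apply: Defs.le_trans (jn_ub1 _ _ _); rewrite -[X in le X _]add0r; exact: le_add.
have mz : m = 0.
  apply: normr0_eq0; apply/eqP; rewrite eq_le normr_ge0 andbT.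
  apply/ler_addgt0Pr => e e0; rewrite add0r; exact/ltW/Hm.
have h : le (- x) 0 by rewrite -mz; exact: jn_ub1.
by have := le_opp h; rewrite oppr0 opprK.
Qed.

Lemma pos_mono (T : E -> E) : positive_op BL T -> forall x y, le x y -> le (T x) (T y).
Proof.
move=> [lT pT] x y h; apply: le_sub0'; rewrite -linop_sub //; apply: pT; exact: le_sub0.
Qed.
Lemma ab_T (T : E -> E) : positive_op BL T -> forall x, le (ab (T x)) (T (ab x)).
Proof.
move=> hT x; apply: jn_least; first by apply: pos_mono => //; exact: jn_ub1.
rewrite -linop_opp; last by case: hT.
by apply: pos_mono => //; exact: jn_ub2.
Qed.
Lemma norm_T (T : E -> E) : positive_op BL T -> forall x, `|T x| <= `|T (ab x)|.
Proof.
move=> hT x; apply: (@norm_lattice _ _ BL); change (le (ab (T x)) (ab (T (ab x)))).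
rewrite (ab_pos (_ : le 0 (T (ab x)))); first exact: ab_T.
by case: hT => _; apply; exact: ab_ge0.
Qed.
Lemma op_pos (Pr : E -> E) : order_projection BL Pr -> positive_op BL Pr.
Proof. by case=> lP [_ h]; split => // x /h []. Qed.
Lemma op_contr (Pr : E -> E) : order_projection BL Pr -> forall x, `|Pr x| <= `|x|.
Proof.
move=> hP x; apply: (@norm_lattice _ _ BL); change (le (ab (Pr x)) (ab x)).
apply: Defs.le_trans (ab_T (op_pos hP) x) _.
by case: hP => _ [_ h]; have [] := h _ (ab_ge0 x).
Qed.
Lemma auto_cont (T : E -> E) : KB_space BL -> positive_op BL T ->
  exists C : R, forall x, `|T x| <= C * `|x|.
Proof.
move=> KB hT.
suff [C HC] : exists C : R, forall p, le 0 p -> `|T p| <= C * `|p|.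
  exists C => x; apply: le_trans (norm_T hT x) _.
  by rewrite -(norm_ab x); apply: HC; exact: ab_ge0.
apply: contrapT => Hneg.
have H : forall n : nat, exists p, le 0 p /\ (n.+1%:R / cc R n) * `|p| < `|T p|.
  move=> n; apply: contrapT => Hn; apply: Hneg; exists (n.+1%:R / cc R n) => p p0.
  rewrite leNgt; apply/negP => hlt; apply: Hn; exists p; split => //.
have [pp Hpp] := choice H.
have lT : linop T by case: hT.
have pn0 : forall n, 0 < `|pp n|.
  move=> n; have [_ h] := Hpp n; rewrite normr_gt0; apply/negP => /eqP e0.
  by move: h; rewrite e0 linop0 // normr0 mulr0 ltxx.
pose xx n := (cc R n / `|pp n|) *: pp n.
have cpos : forall n, 0 <= cc R n / `|pp n| by move=> n; rewrite divr_ge0 // ltW // cc_gt0.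
have xx0 : forall n, le 0 (xx n).
  by move=> n; have := le_scale (cpos n) (proj1 (Hpp n)); rewrite scaler0.
have nxx : forall n, `|xx n| = cc R n.
  move=> n; rewrite normrZ ger0_norm // -mulrA mulVf ?mulr1 //; exact: lt0r_neq0.
have Txx : forall n, n.+1%:R < `|T (xx n)|.
  move=> n; rewrite /xx linop_scale // normrZ ger0_norm //.
  have [_ h] := Hpp n; have c0 := cc_gt0 R n; have q0 := pn0 n.
  rewrite [X in X < _](_ : _ = (cc R n / `|pp n|) * ((n.+1%:R / cc R n) * `|pp n|)).
    by rewrite ltr_pM2l ?divr_gt0.
  by field; rewrite !gt_eqF.
pose fix S (N : nat) : E := if N is M.+1 then S M + xx M else 0.
have Sinc : forall N, le (S N) (S N.+1).
  by move=> N /=; have := le_add (S N) (xx0 N); rewrite add0r addrC.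
have Smono : forall a b, (a <= b)%N -> le (S a) (S b).
  move=> a b /subnK <-; elim: (b - a)%N => [|k IH]; first exact: Defs.le_refl.
  exact: Defs.le_trans IH (Sinc _).
have Snorm : forall N, `|S N| <= 1 - bb R N.
  elim => [|N IH] /=; first by rewrite normr0 /bb invr1 subrr.
  apply: le_trans (ler_normD _ _) _; rewrite nxx /cc; lra.
have : cvg (S @ \oo).
  apply: KB => //; exists 1 => N; have := Snorm N; have := bb_gt0 R N; lra.
move/cvg_ex => [s Hs].
have sge : forall n, le (xx n) s.
  move=> n; apply: le_sub0'; apply: cone_closed => e e0.
  move/cvgrPdist_lt: Hs => /(_ e e0) [J _ HJ].
  pose N := maxn J n.+1.
  exists (S N - xx n); split.
    apply: le_sub0; apply: Defs.le_trans (Smono _ _ (leq_maxr J n.+1)) => /=.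
    have := le_add (xx n) (Smono 0 n (leq0n n)); rewrite add0r addrC; exact.
  rewrite opprB addrA subrK distrC; exact: HJ (leq_maxl _ _).
have Tsge : forall n, n.+1%:R < `|T s|.
  move=> n; apply: lt_le_trans (Txx n) _; apply: norm_mono.
    by case: hT => _; apply.
  exact: pos_mono.
have := Tsge (Num.Def.trunc `|T s|); rewrite ltNge => /negP; apply.
exact/ltW/truncnS_gt.
Qed.

End BLat.
Section SeqNorm.
Variables (R : realType) (E : completeNormedModType R).
Definition bnd (x : nat -> E) := exists M : R, forall n, `|x n| <= M.

Lemma mnorm_ub (x : nat -> E) n : bnd x -> `|x n| <= mnorm x.
Proof.
move=> [M HM]; apply: sup_ubound; last by exists n.
by exists M => _ [m _ <-].
Qed.
Lemma mnorm_le (x : nat -> E) (M : R) : (forall n, `|x n| <= M) -> mnorm x <= M.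
Proof.
move=> HM; apply: ge_sup; first by exists `|x 0%N|, 0%N.
by move=> _ [m _ <-].
Qed.
Lemma mnorm_ge0 (x : nat -> E) : bnd x -> 0 <= mnorm x.
Proof. by move=> h; apply: le_trans (mnorm_ub 0 h). Qed.

Lemma bndD (x y : nat -> E) (a : R) : bnd x -> bnd y -> bnd (fun n => a *: x n + y n).
Proof.
move=> [M1 h1] [M2 h2]; exists (`|a| * M1 + M2) => n.
apply: le_trans (ler_normD _ _) _; rewrite normrZ; apply: lerD => //.
by apply: ler_wpM2l.
Qed.

Lemma mnorm_tri (x y : nat -> E) : bnd x -> bnd y ->
  mnorm (fun n => x n + y n) <= mnorm x + mnorm y.
Proof.
move=> bx by_; apply: mnorm_le => n; apply: le_trans (ler_normD _ _) _.
by apply: lerD; apply: mnorm_ub.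
Qed.
Lemma mnormZ (x : nat -> E) (a : R) : bnd x -> mnorm (fun n => a *: x n) = `|a| * mnorm x.
Proof.
move=> bx; apply/eqP; rewrite eq_le; apply/andP; split.
  by apply: mnorm_le => n; rewrite normrZ; apply: ler_wpM2l => //; apply: mnorm_ub.
have [->|a0] := eqVneq a 0.
  by rewrite normr0 mul0r; apply: mnorm_ge0; exists 0 => n; rewrite scale0r normr0.
rewrite -ler_pdivlMl ?normr_gt0 //.
apply: mnorm_le => n; rewrite ler_pdivlMl ?normr_gt0 //.
rewrite -normrZ; apply: mnorm_ub.
have [M HM] := bx; exists (`|a| * M) => m; rewrite normrZ; exact: ler_wpM2l.
Qed.
Lemma mnorm_def (x : nat -> E) : bnd x -> mnorm x = 0 -> x = (fun _ => 0).
Proof.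
move=> bx h; apply: funext => n; apply: normr0_eq0; apply/eqP.
by rewrite eq_le normr_ge0 andbT -h mnorm_ub.
Qed.
End SeqNorm.

Section Test.
Variables (R : realType) (E : completeNormedModType R).
Goal forall (F : (nat -> E) -> nat -> E) (x y : nat -> E), mnorm (y - F x) = mnorm (fun n => y n - F x n).
Proof. move=> F x y. reflexivity. Qed.
Goal forall (x y : nat -> E) (a : R), (a *: x + y) = (fun n => a *: x n + y n).
Proof. move=> x y a. reflexivity. Qed.
Goal (0 : nat -> E) = (fun _ => 0).
Proof. reflexivity. Qed.
End Test.
Section EC. Variables (R : realType) (E : completeNormedModType R).
Lemma E_complete (u : nat -> E) :
  (forall e : R, 0 < e -> exists J, forall j m, (J <= j)%N -> (j <= m)%N -> `|u m - u j| <= e) ->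
  exists v : E, forall e : R, 0 < e -> exists J, forall j, (J <= j)%N -> `|v - u j| <= e.
Proof.
move=> Hc.
have : cauchy_ex (u @ \oo).
  move=> e e0; have [J HJ] := Hc (e / 2) (divr_gt0 e0 (ltr0Sn _ 1)).
  exists (u J); exists J => // m /= Jm.
  rewrite -ball_normE /ball_ /= distrC. apply: le_lt_trans (HJ J m (leqnn _) Jm) _.
  by rewrite ltr_pdivrMr // ltr_pMr // ltr1n.
move/cauchy_exP/cauchy_cvg => /cvg_ex [v Hv].
exists v => e e0.
move/cvgrPdist_le: Hv => /(_ e e0) [J _ HJ]. exists J => j Jj. exact: HJ.
Qed.
End EC.
Section Filt.
Variables (R : realType) (E : completeNormedModType R) (BL : BanachLattice E).
Variable B : (E -> E) -> Prop.
Variable hB : boolean_subalgebra BL B.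

Lemma Lshift_ff (z : nat -> E -> E) : forward_filtration B z -> forward_filtration B (Lshift z).
Proof.
move=> [h1 [h2 h3]]; split; first by case=> [|n]; rewrite /Lshift /=; apply: h1.
split; last by move=> x; rewrite /Lshift /=; exact: h3.
case=> [|n] x; rewrite /Lshift /=; last exact: h2.
by rewrite !h3.
Qed.
Lemma Lk_ff k (z : nat -> E -> E) : forward_filtration B z -> forward_filtration B (Lk k z).
Proof. by move=> h; elim: k => [|k IH] //=; exact: Lshift_ff. Qed.
Lemma Lk_S k (z : nat -> E -> E) n : Lk k z n.+1 = z (n.+1 + k)%N.
Proof.
elim: k n => [|k IH] n; first by rewrite addn0.
by rewrite /Lk iterS -/(Lk k z) /Lshift /= IH addSnnS.
Qed.

Variable z : nat -> E -> E.
Variable hz : forward_filtration B z.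

Lemma z_op n : order_projection BL (z n).
Proof. by case: hB => h _; apply: h; case: hz. Qed.
Lemma z_lin n : linop (z n).
Proof. by case: (z_op n). Qed.
Lemma z_idem n x : z n (z n x) = z n x.
Proof. by case: (z_op n) => _ []. Qed.
Lemma z_mono a b x : (a <= b)%N -> z a (z b x) = z a x.
Proof.
move=> /subnK <-; elim: (b - a)%N x => [|k IH] x; first by rewrite add0n z_idem.
case: hz => _ [h2 _].
by rewrite addSn -IH h2 IH.
Qed.
Lemma z_contr n x : `|z n x| <= `|x|.
Proof. exact: op_contr (z_op n) x. Qed.
Lemma zB n x y : z n x - z n y = z n (x - y).
Proof. by rewrite (linop_sub (z_lin n)). Qed.

Lemma Mb_bnd x : Mb z x -> bnd x.
Proof. by case. Qed.

Lemma Mb_lin (a : R) x y : Mb z x -> Mb z y -> Mb z (fun n => a *: x n + y n).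
Proof.
move=> [hx bx] [hy by_]; split; last exact: bndD.
by move=> n m nm; rewrite (z_lin n.+1 a (x m) (y m)) hx // hy.
Qed.

Lemma Mb_complete (u : nat -> nat -> E) : (forall j, Mb z (u j)) ->
  (forall e, 0 < e -> exists J, forall j m, (J <= j)%N -> (j <= m)%N -> mnorm (u m - u j) <= e) ->
  exists2 v, Mb z v & forall e, 0 < e -> exists J, forall j, (J <= j)%N -> mnorm (v - u j) <= e.
Proof.
move=> Mu Hc.
have bdiff : forall j m, bnd (u m - u j).
  move=> j m; have := bndD (-1) (Mb_bnd (Mu j)) (Mb_bnd (Mu m)).
  by case=> M HM; exists M => n; have := HM n; rewrite scaleN1r addrC.
have Hco : forall n, exists vn : E, forall e, 0 < e -> exists J, forall j, (J <= j)%N -> `|vn - u j n| <= e.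
  move=> n; apply: E_complete => e e0; have [J HJ] := Hc e e0; exists J => j m Jj jm.
  apply: le_trans (HJ j m Jj jm); exact: (mnorm_ub n (bdiff j m)).
have [v Hv] := choice Hco.
have Hunif : forall e, 0 < e -> exists J, forall j n, (J <= j)%N -> `|v n - u j n| <= e.
  move=> e e0; have [J HJ] := Hc e e0; exists J => j n Jj.
  apply: le_eps => eta eta0; have [J' HJ'] := Hv n eta eta0.
  pose m := maxn J' j.
  have h1 := HJ' m (leq_maxl _ _).
  have h2 := le_trans (mnorm_ub n (bdiff j m)) (HJ j m Jj (leq_maxr _ _)).
  have -> : v n - u j n = (v n - u m n) + (u m n - u j n) by rewrite addrA subrK.
  apply: le_trans (ler_normD _ _) _; rewrite addrC; apply: lerD => //.
have vb : bnd v.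
  have [J HJ] := Hunif 1 ltr01; have [M HM] := Mb_bnd (Mu J).
  exists (1 + M) => n; have -> : v n = (v n - u J n) + u J n by rewrite subrK.
  by apply: le_trans (ler_normD _ _) _; apply: lerD => //; apply: HJ.
exists v.
  split => // n m nm; apply/eqP; rewrite -subr_eq0 -normr_eq0 eq_le normr_ge0 andbT.
  apply/ler_addgt0Pr => e e0; rewrite add0r.
  have [J HJ] := Hunif (e / 2) (divr_gt0 e0 (ltr0Sn _ 1)).
  have [hu _] := Mu J.
  have -> : z n.+1 (v m) - v n = z n.+1 (v m - u J m) + (u J n - v n).
    by rewrite -zB hu // addrA subrK.
  apply: le_trans (ler_normD _ _) _.
  have h1 := le_trans (z_contr n.+1 _) (HJ J m (leqnn _)).
  have h2 := HJ J n (leqnn _); rewrite distrC in h2.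
  have := lerD h1 h2; lra.
move=> e e0; have [J HJ] := Hunif e e0; exists J => j Jj.
by apply: mnorm_le => n; apply: HJ.
Qed.

End Filt.
Section Main.
Variables (R : realType) (E : completeNormedModType R) (BL : BanachLattice E).
Variables (B : (E -> E) -> Prop) (T : E -> E).
Variable hB : boolean_subalgebra BL B.
Variable hT : positive_op BL T.
Variable hV : forall pi, B pi -> forall x y, pi x = pi y -> pi (T x) = pi (T y).
Variable C : R.
Variable C0 : 0 <= C.
Variable HC : forall x, `|T x| <= C * `|x|.

Lemma lT : linop T. Proof. by case: hT. Qed.

Lemma bndB (x y : nat -> E) : bnd x -> bnd y -> bnd (fun n => y n - x n).
Proof.
move=> bx by_; have [M HM] := bndD (-1) bx by_; exists M => n.
by have := HM n; rewrite scaleN1r addrC.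
Qed.

Lemma contT : cont_EE T.
Proof.
move=> x e e0; exists (e / (C + 1)); first by rewrite divr_gt0 // ltr_wpDl.
move=> y hy; rewrite -(linop_sub lT); apply: le_lt_trans (HC _) _.
move: hy; rewrite ltr_pdivlMr ?ltr_wpDl // => hy.
have := normr_ge0 (y - x); nra.
Qed.

Section Z.
Variable z : nat -> E -> E.
Variable hz : forward_filtration B z.

Lemma zB' n x y : z n x - z n y = z n (x - y).
Proof. exact: (zB hB hz n x y). Qed.

Lemma iotaT x : iota_xi z (T x) = That z T (iota_xi z x).
Proof.
apply: funext => n; rewrite /iota_xi /That; apply: hV; first by case: hz.
by rewrite (z_idem hB hz).
Qed.
Lemma iota_Mb x : Mb z (iota_xi z x).
Proof.
split; first by move=> n m nm; rewrite /iota_xi (z_mono hB hz).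
by exists `|x| => n; exact: (z_contr hB hz).
Qed.
Lemma iota_lin (a : R) x y : iota_xi z (a *: x + y) = (fun n => a *: iota_xi z x n + iota_xi z y n).
Proof. by apply: funext => n; rewrite /iota_xi (z_lin hB hz). Qed.
Lemma iota_cont : cont_EM (iota_xi z).
Proof.
move=> x e e0; exists e => // y hy; apply: le_lt_trans hy.
by apply: mnorm_le => n; rewrite /iota_xi zB'; exact: (z_contr hB hz).
Qed.

Lemma That_Mb x : Mb z x -> Mb z (That z T x).
Proof.
move=> [hx [M hM]]; split.
  move=> n m nm; rewrite /That (z_mono hB hz) //; apply: hV; first by case: hz.
  by rewrite -(hx n m nm) (z_idem hB hz).
exists (C * M) => n; rewrite /That; apply: le_trans (z_contr hB hz _ _) _.
by apply: le_trans (HC _) _; apply: ler_wpM2l.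
Qed.
Lemma That_lin : seq_linear (Mb z) (That z T).
Proof.
by move=> a x y _ _; apply: funext => n; rewrite /That lT (z_lin hB hz).
Qed.
Lemma That_bound x y : Mb z x -> Mb z y ->
  mnorm (fun n => That z T y n - That z T x n) <= C * mnorm (fun n => y n - x n).
Proof.
move=> hx hy; apply: mnorm_le => n; rewrite /That zB' -(linop_sub lT).
apply: le_trans (z_contr hB hz _ _) _; apply: le_trans (HC _) _.
apply: ler_wpM2l => //; apply: (mnorm_ub n (bndB (Mb_bnd hx) (Mb_bnd hy))).
Qed.
Lemma That_cont : cont_MM (Mb z) (That z T).
Proof.
move=> x hx e e0; exists (e / (C + 1)); first by rewrite divr_gt0 // ltr_wpDl.
move=> y hy hd; apply: le_lt_trans (That_bound hx hy) _.
move: hd; rewrite ltr_pdivlMr ?ltr_wpDl // => hd.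
have := mnorm_ge0 (bndB (Mb_bnd hx) (Mb_bnd hy)); nra.
Qed.
Lemma That_N x : Mb z x -> mnorm (That z T x) <= C * mnorm x.
Proof.
move=> hx; apply: mnorm_le => n; rewrite /That.
apply: le_trans (z_contr hB hz _ _) _; apply: le_trans (HC _) _.
apply: ler_wpM2l => //; exact: (mnorm_ub n (Mb_bnd hx)).
Qed.

Lemma sh_Mb x : Mb z x -> Mb (Lshift z) (sh x).
Proof.
move=> [hx [M hM]]; split; last by exists M => n; exact: hM.
by move=> n m nm; exact: (hx n.+1 m.+1 nm).
Qed.
Lemma sh_lin : seq_linear (Mb z) sh.
Proof. by []. Qed.
Lemma sh_cont : cont_MM (Mb z) sh.
Proof.
move=> x hx e e0; exists e => // y hy hd; apply: le_lt_trans hd.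
apply: mnorm_le => n; rewrite /sh.
exact: (mnorm_ub n.+1 (bndB (Mb_bnd hx) (Mb_bnd hy))).
Qed.

Lemma Mb0 : Mb z 0.
Proof.
split; last by exists 0 => n; rewrite normr0.
by move=> n m _; exact: linop0 (z_lin hB hz n.+1).
Qed.

Lemma That_open : (forall y, Mb z y -> exists2 x, Mb z x & That z T x = y) ->
  open_MM (Mb z) (That z T).
Proof.
move=> Hs x hx e e0.
apply: (@open_main R (nat -> E) (Mb z) (@mnorm R E) (That z T) _ Mb0 _ _ _ _ That_Mb _ C _ Hs x hx e e0).
- by move=> a u v hu hv; exact: (Mb_lin hB hz).
- by move=> u v hu hv; exact: mnorm_tri (Mb_bnd hu) (Mb_bnd hv).
- by move=> a u hu; exact: mnormZ (Mb_bnd hu).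
- by move=> u hu h; exact: mnorm_def (Mb_bnd hu) h.
- by move=> u hu hc; exact: (Mb_complete hB hz hu hc).
- by move=> a u v hu hv; exact: That_lin.
- exact: That_N.
Qed.
End Z.

Lemma lift_surj (xi : nat -> E -> E) (hxi : forward_filtration B xi) k :
  (forall y, Mb xi y -> exists2 x, Mb xi x & That xi T x = y) ->
  forall y, Mb (Lk k xi) y -> exists2 x, Mb (Lk k xi) x & That (Lk k xi) T x = y.
Proof.
move=> Hs y [hy [M hM]].
have hy' : forall n m, (n <= m)%N -> xi (n.+1 + k)%N (y m) = y n.
  by move=> n m nm; rewrite -Lk_S; exact: hy.
pose y' j := xi j.+1 (y (j - k)%N).
have My' : Mb xi y'.
  split; last by exists M => j; apply: le_trans (z_contr hB hxi _ _) (hM _).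
  move=> n m nm; rewrite /y' (z_mono hB hxi) //.
  have nmk : (n - k <= m - k)%N by lia.
  rewrite -(hy' (n - k)%N (m - k)%N nmk) (z_mono hB hxi) //; lia.
have [x' Mx' Hx'] := Hs y' My'.
exists (fun n => x' (n + k)%N).
  case: Mx' => hx' [M' hM']; split; last by exists M' => n; exact: hM'.
  by move=> n m nm; rewrite Lk_S addSn; apply: hx'; rewrite leq_add2r.
apply: funext => n; rewrite /That Lk_S addSn.
have := congr1 (fun f => f (n + k)%N) Hx'; rewrite /That /= => ->.
by rewrite /y' addnK -addSn hy'.
Qed.

End Main.
Unset Implicit Arguments.
Set Strict Implicit.

Theorem corollary4p7 (R : realType) (E : completeNormedModType R)
  (BL : BanachLattice E) (B : (E -> E) -> Prop) (xi : nat -> E -> E) (T : E -> E) :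
  KB_space BL -> boolean_subalgebra BL B -> forward_filtration B xi ->
  volterra BL B T ->
  (forall k : nat,
     (forall x, iota_xi (Lk k xi) (T x) = That (Lk k xi) T (iota_xi (Lk k xi) x)) /\
     (forall x, Mb (Lk k xi) x ->
        sh (That (Lk k xi) T x) = That (Lk k.+1 xi) T (sh x)) /\
     (forall x, sh (iota_xi (Lk k xi) x) = iota_xi (Lk k.+1 xi) x) /\
     (* all maps are norm continuous operators between the spaces involved *)
     (linop T /\ cont_EE T) /\
     ((forall x, Mb (Lk k xi) (iota_xi (Lk k xi) x)) /\
      (forall (a : R) x y, iota_xi (Lk k xi) (a *: x + y)
                         = (fun n => a *: iota_xi (Lk k xi) x n + iota_xi (Lk k xi) y n)) /\
      cont_EM (iota_xi (Lk k xi))) /\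
     ((forall x, Mb (Lk k xi) x -> Mb (Lk k xi) (That (Lk k xi) T x)) /\
      seq_linear (Mb (Lk k xi)) (That (Lk k xi) T) /\
      cont_MM (Mb (Lk k xi)) (That (Lk k xi) T)) /\
     ((forall x, Mb (Lk k xi) x -> Mb (Lk k.+1 xi) (sh x)) /\
      seq_linear (Mb (Lk k xi)) sh /\
      cont_MM (Mb (Lk k xi)) sh)) /\
  ((forall y, Mb xi y -> exists2 x, Mb xi x & That xi T x = y) ->
   forall k : nat, (1 <= k)%N -> open_MM (Mb (Lk k xi)) (That (Lk k xi) T)).
Proof.
move=> KB hB hxi [hT hV].
have [C0 HC0] := auto_cont KB hT.
have C0ge : 0 <= `|C0| := normr_ge0 _.
have HC : forall x, `|T x| <= `|C0| * `|x|.
  by move=> x; apply: le_trans (HC0 x) _; apply: ler_wpM2r => //; exact: ler_norm.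
split.
  move=> k; have hz := Lk_ff k hxi.
  split; first exact: (iotaT hB hV hz).
  split; first by move=> x _; apply: funext.
  split; first by move=> x; apply: funext.
  split; first exact: (conj hT.1 (contT hT C0ge HC)).
  split; first exact: (conj (iota_Mb hB hz) (conj (iota_lin hB hz) (iota_cont hB hz))).
  split.
    split; first by move=> x hx; exact: (That_Mb hB hV C0ge HC hz hx).
    split; first by move=> a x y hx hy; exact: (That_lin hB hT hz a hx hy).
    exact: (That_cont hB hT C0ge HC hz).
  split; first by move=> x hx; exact: (sh_Mb hx).
  split; first exact: sh_lin.
  exact: sh_cont.
move=> Hs k _; apply: (That_open hB hT hV C0ge HC (Lk_ff k hxi)).
exact: (lift_surj hB C0ge hxi Hs).
Qed.
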